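(* Let $\alpha>1$, $r>0$, and let $f:(0,r)\to(0,\infty)$ be a monotonically nondecreasing function such that $f(x)\simeq x^\alpha$ as $x\to0$ and $f(x)<x$ for all $x\in(0,r)$. For $x_1\in(0,r)$ define the sequence $(x_n)_{n\ge1}$ by $x_{n+1}=x_n-f(x_n)$, and let $S(x_1)=\{x_n:n\ge1\}\subset\mathbb{R}$. Then $x_n\simeq n^{-1/(\alpha-1)}$ as $n\to\infty$, $\dim_B S(x_1)=1-\frac1\alpha$, and $S(x_1)$ is Minkowski nondegenerate.
   Context: For sequences of positive reals, $a_n\simeq b_n$ as $n\to\infty$ means there exist constants $0<A\le B$ with $A\le a_n/b_n\le B$ for all $n$. For positive functions, $f(x)\simeq g(x)$ as $x\to0$ means there exist constants $0<A\le B$ with $f(x)/g(x)\in[A,B]$ for all sufficiently small $x>0$. For a bounded set $S\subset\mathbb{R}$ and $\varepsilon>0$, $S_\varepsilon=\{y\in\mathbb{R}: \mathrm{dist}(y,S)<\varepsilon\}$ and $|S_\varepsilon|$ denotes its Lebesgue measure. For $s\ge0$, the upper and lower $s$-dimensional Minkowski contents are $\mathcal M^{*s}(S)=\limsup_{\varepsilon\to0}|S_\varepsilon|/\varepsilon^{1-s}$ and $\mathcal M_*^{s}(S)=\liminf_{\varepsilon\to0}|S_\varepsilon|/\varepsilon^{1-s}$. The upper box dimension is $\overline{\dim}_BS=\inf\{s\ge0:\mathcal M^{*s}(S)=0\}$, the lower box dimension $\underline{\dim}_BS=\inf\{s\ge0:\mathcal M_*^{s}(S)=0\}$; if they coincide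 the common value is $\dim_BS$. $S$ is Minkowski nondegenerate if there is $d\ge0$ with $0<\mathcal M_*^d(S)\le\mathcal M^{*d}(S)<\infty$. A sequence is identified with the set of its terms. *)

(* Defs.v *)
From Stdlib Require Import Reals Lra Lia ClassicalEpsilon.
Open Scope R_scope.

Definition is_glb (E : R -> Prop) (m : R) : Prop :=
  (forall x, E x -> m <= x) /\ (forall b, (forall x, E x -> b <= x) -> b <= m).

(* Sums of lengths of countable covers of A by open intervals (a_n, b_n)
   (only covers with finite total length are recorded). *)
Definition cover_sums (A : R -> Prop) (m : R) : Prop :=
  exists a b : nat -> R,
    (forall n, a n <= b n) /\
    (forall x, A x -> exists n, a n < x < b n) /\
    infinite_sum (fun n => b n - a n) m.

(* Lebesgue (outer) measure of A: the infimum of the cover sums.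
   For bounded A (the only case used) this infimum exists and is the
   Lebesgue measure when A is measurable (e.g. open). *)
Definition leb_measure (A : R -> Prop) : R :=
  epsilon (inhabits 0) (fun m => is_glb (cover_sums A) m).

Definition nbhd (S : R -> Prop) (eps : R) : R -> Prop :=
  fun y => exists z, S z /\ Rabs (y - z) < eps.

Definition mink_ratio (S : R -> Prop) (s eps : R) : R :=
  leb_measure (nbhd S eps) / Rpower eps (1 - s).

(* Upper Minkowski content is zero: limsup_{eps->0+} ratio = 0
   (the ratio is nonnegative, so this means ratio -> 0). *)
Definition upper_content_zero (S : R -> Prop) (s : R) : Prop :=
  forall eta, 0 < eta -> exists delta, 0 < delta /\
    forall eps, 0 < eps < delta -> mink_ratio S s eps < eta.

Definition lower_content_zero (S : R -> Prop) (s : R) : Prop :=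
  forall eta delta, 0 < eta -> 0 < delta ->
    exists eps, 0 < eps < delta /\ mink_ratio S s eps < eta.

Definition lower_content_pos (S : R -> Prop) (s : R) : Prop :=
  exists c delta, 0 < c /\ 0 < delta /\
    forall eps, 0 < eps < delta -> c <= mink_ratio S s eps.

Definition upper_content_finite (S : R -> Prop) (s : R) : Prop :=
  exists C delta, 0 < delta /\
    forall eps, 0 < eps < delta -> mink_ratio S s eps <= C.

Definition upper_box_dim_eq (S : R -> Prop) (d : R) : Prop :=
  is_glb (fun s => 0 <= s /\ upper_content_zero S s) d.
Definition lower_box_dim_eq (S : R -> Prop) (d : R) : Prop :=
  is_glb (fun s => 0 <= s /\ lower_content_zero S s) d.
Definition box_dim_eq (S : R -> Prop) (d : R) : Prop :=
  upper_box_dim_eq S d /\ lower_box_dim_eq S d.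

(* Minkowski nondegenerate (0 < M_*^d <= M^{*d} < oo; the middle
   inequality holds automatically since liminf <= limsup). *)
Definition minkowski_nondegenerate (S : R -> Prop) : Prop :=
  exists d, 0 <= d /\ lower_content_pos S d /\ upper_content_finite S d.

(* The orbit: orbit f x1 k = x_{k+1}, i.e. x_n = orbit f x1 (n-1). *)
Fixpoint orbit (f : R -> R) (x1 : R) (k : nat) : R :=
  match k with
  | O => x1
  | S k => orbit f x1 k - f (orbit f x1 k)
  end.

Definition orbit_set (f : R -> R) (x1 : R) : R -> Prop :=
  fun y => exists k, y = orbit f x1 k.

(* Main.v *)
Require Import Defs.
From Stdlib Require Import Reals Lra Lia ClassicalEpsilon Classical List RList Rtopology.
Import ListNotations.
Open Scope R_scope.

Lemma glb_ex (E : R -> Prop) : (exists x, E x) -> (forall x, E x -> 0 <= x) -> exists m, is_glb E m.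
Proof.
  intros [x0 Hx0] Hpos.
  destruct (completeness (fun y => E (- y))) as [m [Hm1 Hm2]].
  - exists 0. intros y Hy. specialize (Hpos _ Hy). lra.
  - exists (- x0). rewrite Ropp_involutive. exact Hx0.
  - exists (- m). split.
    + intros x Hx. assert (- x <= m). { apply Hm1. rewrite Ropp_involutive. exact Hx. } lra.
    + intros b Hb. assert (m <= - b). { apply Hm2. intros y Hy. specialize (Hb _ Hy). lra. } lra.
Qed.

Lemma cover_nonneg A m : cover_sums A m -> 0 <= m.
Proof.
  intros [a [b [Hab [_ Hs]]]].
  apply Rle_trans with (sum_f_R0 (fun n => b n - a n) 0).
  - simpl. specialize (Hab 0%nat). lra.
  - apply sum_incr. exact Hs. intros n. specialize (Hab n). lra.
Qed.

Lemma leb_glb A : (exists m, cover_sums A m) -> is_glb (cover_sums A) (leb_measure A).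
Proof.
  intros H. unfold leb_measure. apply epsilon_spec. apply glb_ex. exact H.
  apply cover_nonneg.
Qed.

Lemma leb_le A m : cover_sums A m -> leb_measure A <= m.
Proof.
  intros H. destruct (leb_glb A (ex_intro _ m H)) as [H1 _]. apply H1. exact H.
Qed.

Lemma leb_ge A L : (exists m, cover_sums A m) -> (forall m, cover_sums A m -> L <= m) -> L <= leb_measure A.
Proof.
  intros H H2. destruct (leb_glb A H) as [_ H1]. apply H1. exact H2.
Qed.

Fixpoint lsum (l : list (R*R)) : R :=
  match l with nil => 0 | (a,b)::t => (b - a) + lsum t end.

Lemma lsum_app l1 l2 : lsum (l1 ++ l2) = lsum l1 + lsum l2.
Proof. induction l1 as [|[a b] t IH]; simpl; try rewrite IH; lra. Qed.

Lemma lsum_nonneg l : (forall p, In p l -> fst p <= snd p) -> 0 <= lsum l.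
Proof.
  induction l as [|[a b] t IH]; simpl; intros H. lra.
  assert (a <= b) by (apply (H (a,b)); auto).
  assert (0 <= lsum t) by (apply IH; intros; apply H; auto). lra.
Qed.

Lemma fin_cover : forall n (l : list (R*R)), (length l <= n)%nat ->
  (forall p, In p l -> fst p <= snd p) -> forall c d, c <= d ->
  (forall x, c <= x <= d -> exists p, In p l /\ fst p < x < snd p) -> d - c <= lsum l.
Proof.
  induction n as [|n IH]; intros l Hlen Hle c d Hcd Hcov.
  - destruct l; simpl in Hlen; [|lia].
    destruct (Hcov d) as [p [[] _]]. lra.
  - destruct (Hcov d) as [[a b] [Hin [Ha Hb]]]. lra. simpl in Ha, Hb.
    destruct (in_split _ _ Hin) as [l1 [l2 Heq]]. subst l.
    rewrite lsum_app. simpl.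
    assert (H12 : 0 <= lsum l1 + lsum l2).
    { rewrite <- lsum_app. apply lsum_nonneg. intros p Hp. apply Hle.
      apply in_or_app. destruct (in_app_or _ _ _ Hp); auto. right; right; auto. }
    destruct (Rlt_or_le a c) as [Hac | Hca].
    + lra.
    + assert (a - c <= lsum (l1 ++ l2)).
      { apply IH.
        - rewrite length_app in *. simpl in Hlen. lia.
        - intros p Hp. apply Hle. apply in_or_app. destruct (in_app_or _ _ _ Hp); auto. right; right; auto.
        - exact Hca.
        - intros x Hx. destruct (Hcov x) as [q [Hq Hq2]]. lra.
          exists q. split; auto. apply in_or_app. destruct (in_app_or _ _ _ Hq) as [H|H]; auto.
          destruct H as [H|H]; auto. subst q. simpl in Hq2. lra. }
      rewrite lsum_app in H. lra.
Qed.

Lemma lsum_seq (a b : nat -> R) N :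
  lsum (map (fun i => (a i, b i)) (seq 0 (S N))) = sum_f_R0 (fun n => b n - a n) N.
Proof.
  induction N as [|N IH].
  - simpl. lra.
  - rewrite seq_S, map_app, lsum_app, IH. simpl. lra.
Qed.

Lemma HB_index (a b : nat -> R) c d : c <= d ->
  (forall x, c <= x <= d -> exists n, a n < x < b n) ->
  exists N, forall x, c <= x <= d -> exists n, (n <= N)%nat /\ a n < x < b n.
Proof.
  intros Hcd Hcov.
  set (fam := mkfamily (fun y => exists n, y = INR n) (fun y x => exists n, y = INR n /\ a n < x < b n)
     (fun y (H : exists x, exists n, y = INR n /\ a n < x < b n) =>
        match H with ex_intro _ x (ex_intro _ n (conj e _)) => ex_intro _ n e end)).
  destruct (compact_P3 c d fam) as [D [Hc [l Hl]]].
  - split.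
    + intros x Hx. destruct (Hcov x Hx) as [n Hn]. exists (INR n). exists n. auto.
    + intros y x [n [Hy [H1 H2]]].
      assert (Hd : 0 < Rmin (x - a n) (b n - x)) by (apply Rmin_pos; lra).
      exists (mkposreal _ Hd). intros z Hz. unfold disc in Hz. simpl in Hz.
      apply Rabs_def2 in Hz. destruct Hz as [Hz1 Hz2].
      exists n. split; auto.
      assert (Rmin (x - a n) (b n - x) <= x - a n) by apply Rmin_l.
      assert (Rmin (x - a n) (b n - x) <= b n - x) by apply Rmin_r. lra.
  - destruct (INR_unbounded (MaxRlist l)) as [N HN].
    exists N. intros x Hx. destruct (Hc x Hx) as [y [[n [Hy Hn]] HD]].
    exists n. split; auto.
    assert (Hin : In y l). { apply Hl. split; auto. exists n; auto. }
    apply MaxRlist_P1 in Hin. subst y.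
    assert (INR n < INR N) by lra. apply INR_lt in H. lia.
Qed.

Lemma count_cover (a b : nat -> R) m c d : (forall n, a n <= b n) ->
  infinite_sum (fun n => b n - a n) m -> c <= d ->
  (forall x, c <= x <= d -> exists n, a n < x < b n) -> d - c <= m.
Proof.
  intros Hab Hs Hcd Hcov.
  destruct (HB_index a b c d Hcd Hcov) as [N HN].
  apply Rle_trans with (sum_f_R0 (fun n => b n - a n) N).
  - rewrite <- lsum_seq. apply (fin_cover (length (map (fun i => (a i, b i)) (seq 0 (S N))))); auto.
    + intros p Hp. apply in_map_iff in Hp. destruct Hp as [i [<- _]]. apply Hab.
    + intros x Hx. destruct (HN x Hx) as [n [Hn1 Hn2]]. exists (a n, b n). split; auto.
      apply in_map_iff. exists n. split; auto. apply in_seq. lia.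
  - apply sum_incr. exact Hs. intros n. specialize (Hab n). lra.
Qed.

Lemma leb_interval A c d : (exists m, cover_sums A m) -> c <= d ->
  (forall x, c <= x <= d -> A x) -> d - c <= leb_measure A.
Proof.
  intros Hex Hcd Hsub. apply leb_ge. exact Hex.
  intros m [a [b [Hab [Hcov Hs]]]]. apply (count_cover a b m c d); auto.
Qed.

Lemma Rp_pos x e : 0 < Rpower x e.
Proof. unfold Rpower. apply exp_pos. Qed.

Lemma ln_le_m1 y : 0 < y -> ln y <= y - 1.
Proof. intros Hy. pose proof (exp_ineq1_le (ln y)). rewrite exp_ln in H; lra. Qed.

Lemma ln_ge_1m y : 0 < y -> 1 - / y <= ln y.
Proof.
  intros Hy. pose proof (ln_le_m1 (/ y) (Rinv_0_lt_compat _ Hy)).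
  rewrite ln_Rinv in H; lra.
Qed.

Lemma bern_lo b t : 0 < b -> 0 < t < 1 -> 1 + b * t <= Rpower (1 - t) (- b).
Proof.
  intros Hb Ht. unfold Rpower.
  pose proof (ln_le_m1 (1 - t) ltac:(lra)).
  pose proof (exp_ineq1_le (- b * ln (1 - t))).
  assert (b * t <= - b * ln (1 - t)).
  { replace (- b * ln (1 - t)) with (b * (- ln (1 - t))) by ring.
    apply Rmult_le_compat_l; lra. }
  lra.
Qed.

Lemma bern_hi b t : 0 < b -> 0 < t <= 1/2 -> b * t <= 1/4 -> Rpower (1 - t) (- b) <= 1 + 4 * b * t.
Proof.
  intros Hb Ht Hbt. unfold Rpower.
  pose proof (ln_ge_1m (1 - t) ltac:(lra)).
  set (u := - b * ln (1 - t)).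
  assert (Hu1 : u <= b * (t / (1 - t))).
  { unfold u. replace (- b * ln (1 - t)) with (b * (- ln (1 - t))) by ring.
    apply Rmult_le_compat_l. lra.
    assert (1 - / (1 - t) = - (t / (1 - t))). { field. lra. } lra. }
  assert (Ht2 : t / (1 - t) <= 2 * t).
  { unfold Rdiv. apply Rmult_le_reg_r with (1 - t). lra.
    rewrite Rmult_assoc, Rinv_l by lra. nra. }
  assert (Hu0 : 0 <= u).
  { unfold u. assert (ln (1 - t) < 0). { rewrite <- ln_1. apply ln_increasing; lra. } nra. }
  assert (Hu2 : u <= 2 * b * t) by nra.
  pose proof (exp_ineq1_le (- u)).
  assert (exp u * exp (- u) = 1). { rewrite <- exp_plus. replace (u + - u) with 0 by ring. apply exp_0. }
  assert (0 < exp u) by apply exp_pos.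
  assert (exp u * (1 - u) <= 1) by nra.
  nra.
Qed.

Lemma Rp_mult x a b : Rpower (Rpower x a) b = Rpower x (a * b).
Proof. apply Rpower_mult. Qed.

Lemma Rp_le_l a b c : 0 <= c -> 0 < a <= b -> Rpower a c <= Rpower b c.
Proof. apply Rle_Rpower_l. Qed.

Lemma Rp_lt_l a b c : 0 < c -> 0 < a < b -> Rpower a c < Rpower b c.
Proof. apply Rlt_Rpower_l. Qed.

Lemma Rp_le_neg a b c : 0 <= c -> 0 < a <= b -> Rpower b (- c) <= Rpower a (- c).
Proof.
  intros. rewrite !Rpower_Ropp. apply Rinv_le_contravar. apply Rp_pos. apply Rp_le_l; auto.
Qed.

Lemma Rp_inv_exp x e : 0 < x -> Rpower x (- e) * Rpower x e = 1.
Proof. intros. rewrite <- Rpower_plus. replace (- e + e) with 0 by ring. apply Rpower_O; auto. Qed.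

Lemma Rp_le1 x c : 0 <= c -> 0 < x <= 1 -> Rpower x c <= 1.
Proof. intros. rewrite <- (Rpower_1 1) at 1 by lra. unfold Rpower at 2. rewrite ln_1, Rmult_0_r, exp_0.
  unfold Rpower. rewrite <- exp_0. apply exp_le_3 || idtac.
  assert (ln x <= 0). { destruct (Rle_lt_or_eq_dec x 1) as [H1|H1]; try lra.
    left. rewrite <- ln_1. apply ln_increasing; lra. subst. rewrite ln_1. lra. }
  destruct (Rle_lt_or_eq_dec (c * ln x) 0) as [H2|H2]. nra. left; apply exp_increasing; auto. rewrite H2; lra.
Qed.

Lemma min_index (P : nat -> Prop) : (exists n, P n) -> exists n, P n /\ forall m, (m < n)%nat -> ~ P m.
Proof.
  intros [n Hn]. revert Hn. induction n as [n IH] using (well_founded_induction Wf_nat.lt_wf). intros Hn.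
  destruct (classic (exists m, (m < n)%nat /\ P m)) as [[m [Hm1 Hm2]]|Hno].
  - apply (IH m Hm1 Hm2).
  - exists n. split; auto. intros m Hm HP. apply Hno. eauto.
Qed.


Lemma Rp_inv_pow z a : 0 < z -> a <> 0 -> Rpower (Rpower z a) (1 / a) = z.
Proof. intros. rewrite Rp_mult. replace (a * (1 / a)) with 1 by (field; auto). apply Rpower_1; auto. Qed.

Lemma Rp_split u v e : 0 < u -> 0 < v -> Rpower (u * v) e = Rpower u e * Rpower v e.
Proof. intros. rewrite Rpower_mult_distr; auto. Qed.

Lemma Rp_self e s : 0 < e -> e * Rpower e s = Rpower e (1 + s).
Proof. intros. rewrite Rpower_plus, Rpower_1; auto. Qed.

Lemma div_le a b p : 0 < p -> a * p <= b -> a <= b / p.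
Proof. intros. apply Rmult_le_reg_r with p; auto. replace (b / p * p) with b by (field; lra). auto. Qed.

Lemma le_div a b p : 0 < p -> b <= a * p -> b / p <= a.
Proof. intros. apply Rmult_le_reg_r with p; auto. replace (b / p * p) with b by (field; lra). auto. Qed.

Section Seq.
Variables (alpha r : R) (f : R -> R) (x1 : R).
Hypothesis halpha : 1 < alpha.
Hypothesis hr : 0 < r.
Hypothesis hpos : forall x, 0 < x < r -> 0 < f x.
Hypothesis hmono : forall x y, 0 < x < r -> 0 < y < r -> x <= y -> f x <= f y.
Hypothesis hlt : forall x, 0 < x < r -> f x < x.
Hypothesis hx1 : 0 < x1 < r.
Variables (A B delta : R).
Hypothesis hA : 0 < A.
Hypothesis hAB : A <= B.
Hypothesis hd : 0 < delta.
Hypothesis hasym : forall x, 0 < x < r -> x < delta -> A * Rpower x alpha <= f x <= B * Rpower x alpha.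

Notation x := (orbit f x1).

Lemma xb k : 0 < x k <= x1.
Proof.
  induction k as [|k IH]; simpl. lra.
  assert (0 < x k < r) by lra. pose proof (hpos _ H). pose proof (hlt _ H). lra.
Qed.

Lemma xr k : 0 < x k < r.
Proof. pose proof (xb k). lra. Qed.

Lemma xS k : x (S k) = x k - f (x k).
Proof. reflexivity. Qed.

Lemma xdec k m : (k <= m)%nat -> x m <= x k.
Proof.
  induction 1. lra. rewrite xS. pose proof (hpos _ (xr m)). lra.
Qed.

Lemma gdec k m : (k <= m)%nat -> f (x m) <= f (x k).
Proof. intros H. apply hmono; try apply xr. apply xdec; auto. Qed.

Lemma nobound c : 0 < c -> ~ (forall k, c <= f (x k)).
Proof.
  intros Hc H.
  assert (Hk : forall k, x k <= x1 - INR k * c).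
  { induction k as [|k IH]. simpl. lra. rewrite xS, S_INR. specialize (H k). lra. }
  destruct (INR_unbounded (x1 / c)) as [n Hn].
  specialize (Hk n). pose proof (xb n).
  assert (INR n * c > x1). { apply Rmult_lt_reg_r with (/ c). apply Rinv_0_lt_compat; lra.
    rewrite Rmult_assoc, Rinv_r by lra. unfold Rdiv in Hn. lra. }
  lra.
Qed.

Lemma xsmall d : 0 < d -> exists K, x K < d.
Proof.
  intros Hd. apply NNPP. intros Hno.
  set (d' := Rmin d x1).
  assert (Hd' : 0 < d' <= x1). { unfold d'. split. apply Rmin_pos; lra. apply Rmin_r. }
  apply (nobound (f d')). apply hpos. lra.
  intros k. apply hmono; try lra. apply xr.
  assert (d <= x k). { apply Rnot_lt_le. intros H. apply Hno. eauto. }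
  assert (d' <= d) by apply Rmin_l. lra.
Qed.

Lemma gsmall e : 0 < e -> exists N, f (x N) < e /\ forall m, (m < N)%nat -> e <= f (x m).
Proof.
  intros He. destruct (min_index (fun n => f (x n) < e)) as [N [H1 H2]].
  - apply NNPP. intros Hno. apply (nobound e He). intros k. apply Rnot_lt_le. intros H. apply Hno; eauto.
  - exists N. split; auto. intros m Hm. apply Rnot_lt_le. apply H2; auto.
Qed.

Definition q := Rmin (1/2) (1 / (4 * (alpha - 1))).
Definition d0 := Rmin (Rmin delta r) (Rpower (q / B) (1 / (alpha - 1))).

Lemma q_pos : 0 < q.
Proof. unfold q. apply Rmin_pos. lra. apply Rdiv_lt_0_compat; lra. Qed.

Lemma d0_pos : 0 < d0.
Proof. unfold d0. apply Rmin_pos. apply Rmin_pos; lra. apply Rp_pos. Qed.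

Lemma small_prop z : 0 < z < d0 -> z < delta /\ z < r /\ B * Rpower z (alpha - 1) <= q.
Proof.
  intros Hz. unfold d0 in Hz.
  assert (H1 := Rmin_l (Rmin delta r) (Rpower (q / B) (1 / (alpha - 1)))).
  assert (H2 := Rmin_r (Rmin delta r) (Rpower (q / B) (1 / (alpha - 1)))).
  assert (H3 := Rmin_l delta r). assert (H4 := Rmin_r delta r).
  split. lra. split. lra.
  assert (Rpower z (alpha - 1) < Rpower (Rpower (q / B) (1 / (alpha - 1))) (alpha - 1)).
  { apply Rp_lt_l. lra. lra. }
  rewrite Rp_mult in H. replace (1 / (alpha - 1) * (alpha - 1)) with 1 in H by (field; lra).
  rewrite Rpower_1 in H. 2: { apply Rdiv_lt_0_compat. apply q_pos. lra. }
  apply Rmult_lt_compat_l with (r := B) in H. 2: lra.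
  replace (B * (q / B)) with q in H by (field; lra). lra.
Qed.

Lemma step z : 0 < z < d0 ->
  Rpower z (- (alpha - 1)) + (alpha - 1) * A <= Rpower (z - f z) (- (alpha - 1)) /\
  Rpower (z - f z) (- (alpha - 1)) <= Rpower z (- (alpha - 1)) + 4 * (alpha - 1) * B /\
  z / 2 <= z - f z.
Proof.
  intros Hz. destruct (small_prop z Hz) as [Hzd [Hzr Hq]].
  assert (Hzr' : 0 < z < r) by lra.
  destruct (hasym z Hzr' Hzd) as [HfA HfB].
  pose proof (hlt z Hzr'). pose proof (hpos z Hzr').
  set (b := alpha - 1) in *. set (p := Rpower z b) in *.
  assert (Hp : 0 < p) by apply Rp_pos.
  assert (Ha : Rpower z alpha = z * p).
  { unfold p. replace alpha with (1 + b) at 1 by (unfold b; ring). rewrite Rpower_plus, Rpower_1; lra. }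
  rewrite Ha in HfA, HfB.
  set (t := f z / z).
  assert (Ht1 : A * p <= t). { unfold t. apply Rmult_le_reg_r with z. lra. replace (f z / z * z) with (f z) by (field; lra). nra. }
  assert (Ht2 : t <= B * p). { unfold t. apply Rmult_le_reg_r with z. lra. replace (f z / z * z) with (f z) by (field; lra). nra. }
  assert (Ht0 : 0 < t < 1). { unfold t. split. apply Rdiv_lt_0_compat; lra.
     apply Rmult_lt_reg_r with z. lra. replace (f z / z * z) with (f z) by (field; lra). lra. }
  assert (Hxz : z - f z = z * (1 - t)). { unfold t. field. lra. }
  assert (Hb : 0 < b) by (unfold b; lra).
  set (y := Rpower z (- b)).
  assert (Hyp : y * p = 1) by (unfold y, p; apply Rp_inv_exp; lra).
  assert (Hy : 0 < y) by apply Rp_pos.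
  assert (Hsplit : Rpower (z - f z) (- b) = y * Rpower (1 - t) (- b)).
  { rewrite Hxz. unfold y. rewrite Rpower_mult_distr; auto; lra. }
  assert (Hq1 : q <= 1/2) by apply Rmin_l.
  assert (Hq2 : q <= 1 / (4 * b)) by apply Rmin_r.
  assert (Hq3 : b * q <= 1/4).
  { apply Rmult_le_compat_l with (r := b) in Hq2. 2: lra.
    replace (b * (1 / (4 * b))) with (1/4) in Hq2 by (field; lra). lra. }
  rewrite Hsplit. split; [|split].
  - pose proof (bern_lo b t Hb Ht0).
    assert (y * (1 + b * t) <= y * Rpower (1 - t) (- b)) by (apply Rmult_le_compat_l; lra).
    assert (y * (b * A * p) <= y * (b * t)).
    { apply Rmult_le_compat_l. lra. replace (b * A * p) with (b * (A * p)) by ring. apply Rmult_le_compat_l; lra. }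
    replace (y * (b * A * p)) with (b * A * (y * p)) in H3 by ring. rewrite Hyp in H3. nra.
  - assert (t <= 1/2) by lra. assert (b * t <= 1/4) by nra.
    pose proof (bern_hi b t Hb ltac:(lra) H2).
    assert (y * Rpower (1 - t) (- b) <= y * (1 + 4 * b * t)) by (apply Rmult_le_compat_l; lra).
    assert (y * (4 * b * t) <= y * (4 * b * (B * p))).
    { apply Rmult_le_compat_l. lra. apply Rmult_le_compat_l; lra. }
    replace (y * (4 * b * (B * p))) with (4 * b * B * (y * p)) in H5 by ring. rewrite Hyp in H5. nra.
  - rewrite Hxz. nra.
Qed.


Notation yy k := (Rpower (orbit f x1 k) (- (alpha - 1))).

Lemma ymono k m : (k <= m)%nat -> yy k <= yy m.
Proof. intros H. apply Rp_le_neg. lra. split. apply xb. apply xdec; auto. Qed.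

Lemma ystep k : x k < d0 -> yy k + (alpha - 1) * A <= yy (S k) <= yy k + 4 * (alpha - 1) * B.
Proof.
  intros H. rewrite xS. destruct (step (x k)) as [H1 [H2 _]]. split. apply xb. auto. lra.
Qed.

Lemma ylin K : x K < d0 -> forall j,
  yy K + (alpha - 1) * A * INR j <= yy (K + j) <= yy K + 4 * (alpha - 1) * B * INR j.
Proof.
  intros HK j. induction j as [|j IH].
  - rewrite Nat.add_0_r. simpl. lra.
  - rewrite Nat.add_succ_r, S_INR.
    assert (x (K + j) < d0). { pose proof (xdec K (K + j) ltac:(lia)). lra. }
    pose proof (ystep (K + j) H). lra.
Qed.

Lemma yrate : exists c D, 0 < c /\ 0 < D /\ forall k, c * (INR k + 1) <= yy k <= D * (INR k + 1).
Proof.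
  destruct (xsmall d0 (d0_pos)) as [K HK].
  pose proof (ylin K HK) as HL.
  assert (Hb : 0 < alpha - 1) by lra.
  assert (Hy0 : 0 < yy 0) by apply Rp_pos.
  assert (HyK : 0 < yy K) by apply Rp_pos.
  assert (HK1 : 0 < INR K + 1) by (pose proof (pos_INR K); lra).
  set (c := Rmin (yy 0 / (2 * (INR K + 1))) ((alpha - 1) * A / 2)).
  assert (Hc1 : c <= yy 0 / (2 * (INR K + 1))) by apply Rmin_l.
  assert (Hc2 : c <= (alpha - 1) * A / 2) by apply Rmin_r.
  assert (Hc : 0 < c). { apply Rmin_pos. apply Rdiv_lt_0_compat; lra. assert (0 < (alpha-1) * A) by nra. lra. }
  exists c, (yy K + 4 * (alpha - 1) * B).
  split; auto. split. { assert (0 < (alpha - 1) * B) by nra. lra. }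
  intros k. split.
  - destruct (Compare_dec.le_lt_dec k (2 * K + 1)) as [Hk|Hk].
    + apply le_INR in Hk. rewrite plus_INR, mult_INR in Hk. simpl in Hk.
      pose proof (ymono 0 k ltac:(lia)).
      apply Rle_trans with (yy 0 / (2 * (INR K + 1)) * (INR k + 1)).
      apply Rmult_le_compat_r. pose proof (pos_INR k); lra. auto.
      apply Rle_trans with (yy 0 / (2 * (INR K + 1)) * (2 * (INR K + 1))).
      apply Rmult_le_compat_l. apply Rlt_le, Rdiv_lt_0_compat; lra. lra.
      replace (yy 0 / (2 * (INR K + 1)) * (2 * (INR K + 1))) with (yy 0) by (field; lra). lra.
    + destruct (HL (k - K)%nat) as [H1 _]. replace (K + (k - K))%nat with k in H1 by lia.
      rewrite minus_INR in H1 by lia.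
      assert (INR k >= 2 * INR K + 2). { apply Rle_ge. replace (2 * INR K + 2) with (INR (2 * K + 2)).
        apply le_INR. lia. rewrite plus_INR, mult_INR. simpl. ring. }
      assert (c * (INR k + 1) <= (alpha - 1) * A / 2 * (INR k + 1)).
      { apply Rmult_le_compat_r. pose proof (pos_INR k); lra. auto. }
      assert (0 < (alpha - 1) * A) by nra. nra.
  - destruct (Compare_dec.le_lt_dec k K) as [Hk|Hk].
    + pose proof (ymono k K Hk). pose proof (pos_INR k). assert (0 < (alpha - 1) * B) by nra. nra.
    + destruct (HL (k - K)%nat) as [_ H1]. replace (K + (k - K))%nat with k in H1 by lia.
      rewrite minus_INR in H1 by lia. pose proof (pos_INR k). pose proof (pos_INR K).
      assert (0 < (alpha - 1) * B) by nra. nra.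
Qed.

Lemma xrate : exists A' B', 0 < A' /\ A' <= B' /\ forall n : nat, (1 <= n)%nat ->
   A' <= x (n - 1) / Rpower (INR n) (- (1 / (alpha - 1))) <= B'.
Proof.
  destruct yrate as [c [D [Hc [HD H]]]].
  set (g := 1 / (alpha - 1)).
  assert (Hg : 0 < g) by (unfold g; apply Rdiv_lt_0_compat; lra).
  assert (Hxk : forall k, x k = Rpower (yy k) (- g)).
  { intros k. rewrite Rp_mult. replace (- (alpha - 1) * - g) with 1 by (unfold g; field; lra).
    rewrite Rpower_1; auto. apply xb. }
  assert (Hmain : forall n, (1 <= n)%nat ->
     Rpower D (- g) <= x (n - 1) / Rpower (INR n) (- g) <= Rpower c (- g)).
  { intros n Hn. destruct n as [|k]. lia. replace (S k - 1)%nat with k by lia.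
    rewrite S_INR. pose proof (pos_INR k). destruct (H k) as [H1 H2].
    assert (Hp : 0 < Rpower (INR k + 1) (- g)) by apply Rp_pos.
    rewrite Hxk. split.
    - apply div_le; auto. rewrite <- Rp_split by lra. apply Rp_le_neg. lra. split. apply Rp_pos. auto.
    - apply le_div; auto. rewrite <- Rp_split by lra. apply Rp_le_neg. lra. split. nra. auto. }
  exists (Rpower D (- g)), (Rpower c (- g)). split. apply Rp_pos. split.
  - destruct (Hmain 1%nat ltac:(lia)). lra.
  - exact Hmain.
Qed.

Lemma meas_bounds : exists c C e0, 0 < c /\ 0 < C /\ 0 < e0 /\ forall e, 0 < e < e0 ->
  c * Rpower e (1 / alpha) <= leb_measure (nbhd (orbit_set f x1) e) <= C * Rpower e (1 / alpha).
Proof.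
  destruct yrate as [c' [D [Hc' [HD Hy]]]].
  destruct (xsmall d0 d0_pos) as [K HK].
  pose proof (hpos _ (xr K)) as HfK.
  set (b := alpha - 1).
  assert (Hb : 0 < b) by (unfold b; lra).
  set (ia := 1 / alpha).
  assert (Hia : 0 < ia) by (unfold ia; apply Rdiv_lt_0_compat; lra).
  exists ((1/2) * Rpower (2 / B) ia),
         (Rpower (2 / A) ia + 2 + (2 / c') * Rpower (2 / B) (- b / alpha)),
         (Rmin 1 (f (x K) / 2)).
  split. { assert (0 < Rpower (2 / B) ia) by apply Rp_pos. lra. }
  split. { assert (0 < Rpower (2 / A) ia) by apply Rp_pos. assert (0 < Rpower (2 / B) (- b / alpha)) by apply Rp_pos.
           assert (0 < 2 / c') by (apply Rdiv_lt_0_compat; lra). nra. }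
  split. { apply Rmin_pos; lra. }
  intros e He.
  assert (He1 : e <= 1) by (pose proof (Rmin_l 1 (f (x K) / 2)); lra).
  assert (He2 : e < f (x K) / 2) by (pose proof (Rmin_r 1 (f (x K) / 2)); lra).
  destruct (gsmall (2 * e) ltac:(lra)) as [N [HN1 HN2]].
  destruct N as [|M].
  { pose proof (gdec 0 K ltac:(lia)). lra. }
  assert (HKM : (K <= M)%nat).
  { destruct (Compare_dec.le_lt_dec K M) as [h|h]; auto. pose proof (gdec (S M) K ltac:(lia)). lra. }
  set (N := S M) in *.
  assert (HM : 2 * e <= f (x M)) by (apply HN2; unfold N; lia).
  assert (HxM : x M < d0) by (pose proof (xdec K M HKM); lra).
  assert (HxN : x N < d0) by (pose proof (xdec K N ltac:(unfold N; lia)); lra).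
  pose proof (xb M) as HxMp. pose proof (xb N) as HxNp.
  destruct (step (x M) ltac:(lra)) as [_ [_ F1]].
  assert (F1' : x M / 2 <= x N) by (unfold N; rewrite xS; lra).
  destruct (small_prop (x M) ltac:(lra)) as [HMd [HMr _]].
  destruct (hasym (x M) ltac:(lra) HMd) as [_ F2].
  destruct (small_prop (x N) ltac:(lra)) as [HNd [HNr _]].
  destruct (hasym (x N) ltac:(lra) HNd) as [F3 _].
  destruct (Hy M) as [F4 _].
  assert (HaM : 2 / B * e <= Rpower (x M) alpha).
  { apply Rmult_le_reg_l with B. lra. replace (B * (2 / B * e)) with (2 * e) by (field; lra). lra. }
  assert (HaN : Rpower (x N) alpha <= 2 / A * e).
  { apply Rmult_le_reg_l with A. lra. replace (A * (2 / A * e)) with (2 * e) by (field; lra). lra. }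
  assert (Hpe : 0 < Rpower e ia) by apply Rp_pos.
  assert (HxM_lo : Rpower (2 / B) ia * Rpower e ia <= x M).
  { rewrite <- Rp_split by (try apply Rdiv_lt_0_compat; lra).
    rewrite <- (Rp_inv_pow (x M) alpha) by (lra || (intro; lra)). apply Rp_le_l. left; exact Hia. split; auto.
    apply Rmult_lt_0_compat; [apply Rdiv_lt_0_compat; lra | lra]. }
  assert (HxN_hi : x N <= Rpower (2 / A) ia * Rpower e ia).
  { rewrite <- Rp_split by (try apply Rdiv_lt_0_compat; lra).
    rewrite <- (Rp_inv_pow (x N) alpha) by (lra || (intro; lra)). apply Rp_le_l. left; exact Hia. split; auto. apply Rp_pos. }
  assert (He_hi : e <= Rpower e ia).
  { rewrite <- (Rpower_1 e) at 1 by lra. replace 1 with (ia + (1 - ia)) by ring.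
    rewrite Rpower_plus. assert (Rpower e (1 - ia) <= 1).
    { apply Rp_le1. unfold ia. assert (1 / alpha < 1). { apply Rmult_lt_reg_r with alpha. lra.
        replace (1 / alpha * alpha) with 1 by (field; lra). lra. } lra. lra. }
    assert (0 < Rpower e (1 - ia)) by apply Rp_pos. nra. }
  assert (HN_hi : e * INR N <= (1 / c') * Rpower (2 / B) (- b / alpha) * Rpower e ia).
  { assert (HyM : Rpower (x M) (- (alpha - 1)) <= Rpower (2 / B) (- b / alpha) * Rpower e (- b / alpha)).
    { rewrite <- Rp_split by (try apply Rdiv_lt_0_compat; lra).
      replace (Rpower (x M) (- (alpha - 1))) with (Rpower (Rpower (x M) alpha) (- (b / alpha))).
      replace (- b / alpha) with (- (b / alpha)) by (field; lra).
      apply Rp_le_neg. apply Rlt_le, Rdiv_lt_0_compat; lra. split; auto.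
      apply Rmult_lt_0_compat; try apply Rdiv_lt_0_compat; lra.
      rewrite Rp_mult. f_equal. unfold b. field. lra. }
    unfold N. rewrite S_INR.
    assert (INR M + 1 <= (1 / c') * (Rpower (2 / B) (- b / alpha) * Rpower e (- b / alpha))).
    { apply Rmult_le_reg_l with c'. lra. replace (c' * (1 / c' * (Rpower (2 / B) (- b / alpha) * Rpower e (- b / alpha)))) with
         (Rpower (2 / B) (- b / alpha) * Rpower e (- b / alpha)) by (field; lra). lra. }
    assert (Hee : e * Rpower e (- b / alpha) = Rpower e ia).
    { rewrite Rp_self by lra. f_equal. unfold ia, b. field. lra. }
    apply Rmult_le_compat_l with (r := e) in H. 2: lra.
    replace (e * (1 / c' * (Rpower (2 / B) (- b / alpha) * Rpower e (- b / alpha)))) with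
      (1 / c' * Rpower (2 / B) (- b / alpha) * (e * Rpower e (- b / alpha))) in H by ring.
    rewrite Hee in H. exact H. }
  set (a := fun n => match n with 0%nat => - e | S j => if Nat.ltb j N then x j - e else 0 end).
  set (bb := fun n => match n with 0%nat => x N + e | S j => if Nat.ltb j N then x j + e else 0 end).
  set (V := x N + 2 * e + 2 * e * INR N).
  assert (Hab : forall n, a n <= bb n).
  { intros [|j]; simpl. lra. destruct (Nat.ltb j N); lra. }
  assert (Hsum : forall n, sum_f_R0 (fun n => bb n - a n) n = x N + 2 * e + 2 * e * INR (Nat.min n N)).
  { induction n as [|n IH].
    - simpl. replace (Nat.min 0 N) with 0%nat by lia. simpl. lra.
    - simpl sum_f_R0. rewrite IH. simpl bb. simpl a. destruct (Nat.ltb n N) eqn:E.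
      + apply Nat.ltb_lt in E. replace (Nat.min (S n) N) with (S (Nat.min n N)) by lia. rewrite S_INR. ring.
      + apply Nat.ltb_ge in E. replace (Nat.min (S n) N) with (Nat.min n N) by lia. ring. }
  assert (Hcov : cover_sums (nbhd (orbit_set f x1) e) V).
  { exists a, bb. split; auto. split.
    - intros yv [z [[k Hk] Hz]]. subst z. apply Rabs_def2 in Hz.
      destruct (Compare_dec.le_lt_dec N k) as [h|h].
      + exists 0%nat. unfold a, bb. cbv beta iota. pose proof (xdec N k h). pose proof (xb k). lra.
      + exists (S k). unfold a, bb. cbv beta iota. replace (Nat.ltb k N) with true by (symmetry; apply Nat.ltb_lt; auto). lra.
    - intros eps Heps. exists N. intros n Hn. unfold R_dist. rewrite Hsum.
      replace (Nat.min n N) with N by lia. unfold V. rewrite Rminus_diag, Rabs_R0. lra. }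
  split.
  - apply Rle_trans with (x N - 0).
    + pose proof (Rp_pos (2 / B) ia). nra.
    + apply leb_interval. eauto. lra.
      intros yv Hyv.
      destruct (xsmall (yv + e) ltac:(lra)) as [j Hj].
      destruct (min_index (fun k => (N <= k)%nat /\ x k < yv + e)) as [k0 [[Hk01 Hk02] Hk03]].
      { exists (j + N)%nat. split. lia. pose proof (xdec j (j + N) ltac:(lia)). lra. }
      exists (x k0). split. exists k0; auto.
      destruct (Nat.eq_dec k0 N) as [h|h].
      * subst k0. apply Rabs_def1; lra.
      * destruct k0 as [|k1]. lia.
        assert (~ (x k1 < yv + e)). { intros Hc. apply (Hk03 k1). lia. split; auto. unfold N in *. lia. }
        pose proof (gdec N k1 ltac:(unfold N in *; lia)).
        rewrite xS in Hk02 |- *. apply Rabs_def1; lra.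
  - apply Rle_trans with V. apply leb_le; auto.
    unfold V. nra.
Qed.
End Seq.

Section Dim.
Variables (S : R -> Prop) (d c C e0 : R).
Hypothesis hd : 0 < d.
Hypothesis hc : 0 < c.
Hypothesis hC : 0 < C.
Hypothesis he0 : 0 < e0.
Hypothesis hrb : forall s e, 0 < e < e0 -> c * Rpower e (s - d) <= mink_ratio S s e <= C * Rpower e (s - d).

Lemma uz s : d < s -> upper_content_zero S s.
Proof.
  intros Hs eta Heta.
  set (w := Rpower (eta / (2 * C)) (1 / (s - d))).
  assert (Hw : 0 < w) by apply Rp_pos.
  exists (Rmin e0 w). split. apply Rmin_pos; lra.
  intros e He.
  assert (He1 : e < e0) by (pose proof (Rmin_l e0 w); lra).
  assert (He2 : e < w) by (pose proof (Rmin_r e0 w); lra).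
  destruct (hrb s e ltac:(lra)) as [_ H].
  assert (Rpower e (s - d) < Rpower w (s - d)) by (apply Rp_lt_l; lra).
  unfold w in H0. rewrite Rp_mult in H0. replace (1 / (s - d) * (s - d)) with 1 in H0 by (field; lra).
  rewrite Rpower_1 in H0. 2: apply Rdiv_lt_0_compat; lra.
  assert (C * Rpower e (s - d) < C * (eta / (2 * C))) by (apply Rmult_lt_compat_l; lra).
  replace (C * (eta / (2 * C))) with (eta / 2) in H1 by (field; lra). lra.
Qed.

Lemma uz_lz s : upper_content_zero S s -> lower_content_zero S s.
Proof.
  intros H eta delta He Hd. destruct (H eta He) as [d1 [Hd1 H1]].
  exists (Rmin delta d1 / 2). assert (0 < Rmin delta d1) by (apply Rmin_pos; lra).
  pose proof (Rmin_l delta d1). pose proof (Rmin_r delta d1).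
  split. lra. apply H1. lra.
Qed.

Lemma nlz s : s < d -> ~ lower_content_zero S s.
Proof.
  intros Hs H. destruct (H c (Rmin e0 1) hc ltac:(apply Rmin_pos; lra)) as [e [He H1]].
  pose proof (Rmin_l e0 1). pose proof (Rmin_r e0 1).
  destruct (hrb s e ltac:(lra)) as [K2 _].
  assert (Rpower e (d - s) <= 1) by (apply Rp_le1; lra).
  assert (1 <= Rpower e (s - d)).
  { replace (s - d) with (- (d - s)) by ring. rewrite Rpower_Ropp.
    assert (0 < Rpower e (d - s)) by apply Rp_pos.
    apply Rmult_le_reg_r with (Rpower e (d - s)); auto. rewrite Rinv_l by lra. lra. }
  nra.
Qed.

Lemma glb_set (P : R -> Prop) : (forall s, d < s -> P s) -> (forall s, s < d -> ~ P s) ->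
  is_glb (fun s => 0 <= s /\ P s) d.
Proof.
  intros K1 K2. split.
  - intros s [_ Hs]. apply Rnot_lt_le. intros Hlt. apply (K2 s Hlt Hs).
  - intros b Hb. apply Rnot_lt_le. intros Hlt.
    assert (b <= (b + d) / 2). { apply Hb. split. lra. apply K1. lra. } lra.
Qed.

Lemma dim_all : box_dim_eq S d /\ exists d', 0 <= d' /\ lower_content_pos S d' /\ upper_content_finite S d'.
Proof.
  split. split.
  - apply glb_set. apply uz. intros s Hs Hu. apply (nlz s Hs). apply uz_lz; auto.
  - apply glb_set. intros s Hs. apply uz_lz, uz; auto. apply nlz.
  - exists d. split. lra. split.
    + exists c, e0. split; auto. split; auto. intros e He. destruct (hrb d e He) as [H _].
      replace (d - d) with 0 in H by ring. rewrite Rpower_O in H; lra.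
    + exists C, e0. split; auto. intros e He. destruct (hrb d e He) as [_ H].
      replace (d - d) with 0 in H by ring. rewrite Rpower_O in H; lra.
Qed.
End Dim.

Theorem theorem1 (alpha r : R) (f : R -> R) (x1 : R)
  (halpha : 1 < alpha) (hr : 0 < r)
  (hpos : forall x, 0 < x < r -> 0 < f x)
  (hmono : forall x y, 0 < x < r -> 0 < y < r -> x <= y -> f x <= f y)
  (hasym : exists A B delta, 0 < A /\ A <= B /\ 0 < delta /\
      forall x, 0 < x < r -> x < delta ->
        A <= f x / Rpower x alpha <= B)
  (hlt : forall x, 0 < x < r -> f x < x)
  (hx1 : 0 < x1 < r) :
  (exists A B, 0 < A /\ A <= B /\
     forall n : nat, (1 <= n)%nat ->
       A <= orbit f x1 (n - 1) / Rpower (INR n) (- (1 / (alpha - 1))) <= B)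
  /\ box_dim_eq (orbit_set f x1) (1 - 1 / alpha)
  /\ minkowski_nondegenerate (orbit_set f x1).
Proof.
  destruct hasym as [A [B [delta [hA [hAB [hd hx]]]]]].
  assert (hasym' : forall x, 0 < x < r -> x < delta -> A * Rpower x alpha <= f x <= B * Rpower x alpha).
  { intros x Hx Hxd. destruct (hx x Hx Hxd) as [H1 H2]. pose proof (Rp_pos x alpha).
    split.
    - apply Rmult_le_reg_r with (/ Rpower x alpha). apply Rinv_0_lt_compat; lra.
      rewrite Rmult_assoc, Rinv_r by lra. lra.
    - apply Rmult_le_reg_r with (/ Rpower x alpha). apply Rinv_0_lt_compat; lra.
      rewrite Rmult_assoc, Rinv_r by lra. lra. }
  split. { exact (xrate alpha r f x1 halpha hr hpos hmono hlt hx1 A B delta hA hAB hd hasym'). }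
  destruct (meas_bounds alpha r f x1 halpha hr hpos hmono hlt hx1 A B delta hA hAB hd hasym')
    as [c [C [e0 [hc [hC [he0 Hm]]]]]].
  assert (Hd : 0 < 1 - 1 / alpha).
  { assert (1 / alpha < 1). { apply Rmult_lt_reg_r with alpha. lra.
        replace (1 / alpha * alpha) with 1 by (field; lra). lra. } lra. }
  assert (Hrb : forall s e, 0 < e < e0 ->
     c * Rpower e (s - (1 - 1 / alpha)) <= mink_ratio (orbit_set f x1) s e <= C * Rpower e (s - (1 - 1 / alpha))).
  { intros s e He. destruct (Hm e He) as [H1 H2]. unfold mink_ratio.
    assert (Hp : 0 < Rpower e (1 - s)) by apply Rp_pos.
    assert (Heq : Rpower e (s - (1 - 1 / alpha)) = Rpower e (1 / alpha) / Rpower e (1 - s)).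
    { unfold Rdiv. rewrite <- Rpower_Ropp, <- Rpower_plus. f_equal. ring. }
    rewrite Heq. split.
    - replace (c * (Rpower e (1 / alpha) / Rpower e (1 - s))) with ((c * Rpower e (1 / alpha)) / Rpower e (1 - s)) by (field; lra).
      unfold Rdiv. apply Rmult_le_compat_r. apply Rlt_le, Rinv_0_lt_compat; lra. lra.
    - replace (C * (Rpower e (1 / alpha) / Rpower e (1 - s))) with ((C * Rpower e (1 / alpha)) / Rpower e (1 - s)) by (field; lra).
      unfold Rdiv. apply Rmult_le_compat_r. apply Rlt_le, Rinv_0_lt_compat; lra. lra. }
  destruct (dim_all (orbit_set f x1) (1 - 1 / alpha) c C e0 Hd hc hC he0 Hrb) as [H1 H2].
  split; auto.
Qed.
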